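(* Let $L$ be a planar semimodular lattice of length at least $2$, let $R$ be a rectangular extension of $L$, fix a planar diagram of $R$ and give $L$ the induced subdiagram. Let $S=\mathrm{lside}_R(C_l(L))$. Then: (i) $S$ is a cover-preserving $\{0,1\}$-sublattice of $R$, and $S$ is a distributive lattice; (ii) $R$ is slim if and only if $L$ is slim.
   Context: All lattices are finite. A planar lattice is a finite lattice with a planar Hasse diagram. $\mathrm{J}(L)$ is the set of nonzero join-irreducible elements; $L$ is slim if $\mathrm J(L)$ is the union of two chains. For a planar diagram, $C_l(\cdot)$, $C_r(\cdot)$ denote the left and right boundary chains; for a maximal chain $C$ of $R$, $\mathrm{lside}_R(C)$ is the set of elements of $R$ on the left of $C$ (elements of $C$ included). A rectangular lattice is a planar semimodular lattice $R$ having a planar diagram $D$ such that $C_l(D)\setminus\{0,1\}$ contains exactly one element that is doubly irreducible in $R$ (the left corner $c_l$), $C_r(D)\setminus\{0,1\}$ contains exactly one doubly irreducible element (the right corner $c_r$), and $c_l\wedge c_r=0$, $c_l\vee c_r=1$. A rectangular extension of a planar semimodular lattice $L$ is a lattice $R$ such that: (a) $R$ is rectangular; (b) $L$ is a cover-preserving $\{0,1\}$-sublattice of $R$ (a sublattice containing $0_R,1_R$ such that $x\prec y$ in $L$ implies $x\prec y$ in $R$); (c) every $x\in R$ that has a lower cover outside $L$ has at most two lower covers in $R$. *)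

(* Defs.v *)
From HB Require Import structures.
From mathcomp Require Import all_boot all_order.
Set Implicit Arguments. Unset Strict Implicit. Unset Printing Implicit Defensive.
Import Order.TTheory.
Local Open Scope order_scope.

Section LatticeNotions.
Variables (d : Order.disp_t) (T : finTBLatticeType d).

Definition covA (A : {set T}) (x y : T) : bool :=
  [&& x \in A, y \in A, x < y & ~~ [exists z in A, (x < z) && (z < y)]].

Definition sublattice01 (A : {set T}) : Prop :=
  [/\ \bot \in A, \top \in A,
      (forall x y, x \in A -> y \in A -> x `&` y \in A) &
      (forall x y, x \in A -> y \in A -> x `|` y \in A)].

Definition cp_sublattice01 (A : {set T}) : Prop :=
  sublattice01 A /\
  (forall x y, covA A x y -> covA [set: T] x y).

Definition semimodular (A : {set T}) : Prop :=
  forall a b c, a \in A -> b \in A -> c \in A -> covA A a b ->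
    (a `|` c == b `|` c) || covA A (a `|` c) (b `|` c).

Definition distributive_on (A : {set T}) : Prop :=
  forall x y z, x \in A -> y \in A -> z \in A ->
    x `&` (y `|` z) = (x `&` y) `|` (x `&` z).

Definition length_ge2 (A : {set T}) : Prop :=
  exists x y z, [/\ x \in A, y \in A, z \in A, x < y & y < z].

Definition join_irr (A : {set T}) (x : T) : bool :=
  [&& x \in A, x != \bot &
      [forall y in A, forall z in A, (x == y `|` z) ==> ((x == y) || (x == z))]].

Definition meet_irr (A : {set T}) (x : T) : bool :=
  [&& x \in A, x != \top &
      [forall y in A, forall z in A, (x == y `&` z) ==> ((x == y) || (x == z))]].

Definition Jset (A : {set T}) : {set T} := [set x | join_irr A x].

Definition is_chain (C : {set T}) : bool :=
  [forall x in C, forall y in C, (x <= y) || (y <= x)].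

Definition slim (A : {set T}) : Prop :=
  exists C1 C2 : {set T}, [/\ is_chain C1, is_chain C2 & Jset A = C1 :|: C2].

(* A planar diagram of the lattice A, encoded by its "strictly on the left of"
   relation lam on incomparable pairs (Kelly--Rival): lam relates exactly the
   incomparable pairs, in one direction each, and both (< ∪ lam) and
   (< ∪ lam^-1) are transitive (hence strict linear orders, forming a
   2-dimensional realizer of A). *)
Definition is_diagram (A : {set T}) (lam : rel T) : Prop :=
  [/\ (forall x y, x \in A -> y \in A -> lam x y -> ~~ (x <= y) && ~~ (y <= x)),
      (forall x y, x \in A -> y \in A -> ~~ (x <= y) -> ~~ (y <= x) ->
          lam x y || lam y x),
      (forall x y, x \in A -> y \in A -> lam x y -> ~~ lam y x),
      (forall x y z, x \in A -> y \in A -> z \in A ->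
          (x < y) || lam x y -> (y < z) || lam y z -> (x < z) || lam x z) &
      (forall x y z, x \in A -> y \in A -> z \in A ->
          (x < y) || lam y x -> (y < z) || lam z y -> (x < z) || lam z x)].

Definition planar (A : {set T}) : Prop := exists lam, is_diagram A lam.

Definition Cl (A : {set T}) (lam : rel T) : {set T} :=
  [set x in A | ~~ [exists y in A, lam y x]].
Definition Cr (A : {set T}) (lam : rel T) : {set T} :=
  [set x in A | ~~ [exists y in A, lam x y]].

Definition lside (lam : rel T) (C : {set T}) : {set T} :=
  [set x | (x \in C) || [exists c in C, lam x c]].

Definition doubly_irr (x : T) : bool :=
  join_irr [set: T] x && meet_irr [set: T] x.

Definition rectangular : Prop :=
  [/\ planar [set: T], semimodular [set: T] &
    exists lam, is_diagram [set: T] lam /\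
      exists cl cr,
        [/\ [set x in Cl [set: T] lam | [&& x != \bot, x != \top & doubly_irr x]]
              = [set cl],
            [set x in Cr [set: T] lam | [&& x != \bot, x != \top & doubly_irr x]]
              = [set cr],
            cl `&` cr = \bot & cl `|` cr = \top]].

(* T (= R) is a rectangular extension of L *)
Definition rect_extension (L : {set T}) : Prop :=
  [/\ rectangular,
      cp_sublattice01 L &
      forall x, [exists y, covA [set: T] y x && (y \notin L)] ->
        #|[set y | covA [set: T] y x]| <= 2].

End LatticeNotions.

(* Main.v *)
Require Import Defs.
From HB Require Import structures.
From mathcomp Require Import all_boot all_order.
Set Implicit Arguments. Unset Strict Implicit. Unset Printing Implicit Defensive.
Import Order.TTheory.
Local Open Scope order_scope.

Section Gen.
Variables (d : Order.disp_t) (T : finTBLatticeType d).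

Lemma wf_rel (r : rel T) : transitive r -> irreflexive r ->
  forall P : T -> Prop, (forall x, (forall y, r y x -> P y) -> P x) -> forall x, P x.
Proof.
move=> tr ir P IH.
suff H : forall n x, (#|[set y | r y x]| <= n)%N -> P x by move=> x; exact: (H _ x (leqnn _)).
elim=> [|n IHn] x Hx; apply: IH => y ryx.
- by move: Hx; rewrite leqn0 => /eqP/cards0_eq/setP/(_ y); rewrite !inE ryx.
- apply: IHn; rewrite -ltnS; apply: leq_trans Hx; apply: proper_card.
  apply/properP; split.
  + by apply/subsetP=> z; rewrite !inE => rzy; exact: tr rzy ryx.
  + by exists y; rewrite !inE ?ryx ?ir.
Qed.

Lemma ex_minr (r : rel T) (P : pred T) x0 : transitive r -> irreflexive r ->
  P x0 -> exists x, P x /\ forall y, P y -> ~~ r y x.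
Proof.
move=> tr ir; move: x0; apply: (wf_rel tr ir) => x IH Px.
case: (boolP [exists y, P y && r y x]).
- by case/existsP=> y /andP[Py ryx]; exact: IH ryx Py.
- move/existsPn=> H; exists x; split=> // y Py.
  by move: (H y); rewrite negb_and Py.
Qed.

Lemma lt_ind (P : T -> Prop) : (forall x, (forall y, y < x -> P y) -> P x) -> forall x, P x.
Proof. apply: wf_rel; [exact: lt_trans| exact: ltxx]. Qed.

Lemma ex_min (P : pred T) x0 : P x0 -> exists x, P x /\ forall y, P y -> ~~ (y < x).
Proof. apply: ex_minr; [exact: lt_trans| exact: ltxx]. Qed.

Lemma ex_max (P : pred T) x0 : P x0 -> exists x, P x /\ forall y, P y -> ~~ (x < y).
Proof.
move=> Px0; apply: (@ex_minr (fun a b => b < a) P x0) => //.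
- by move=> a b c hba hcb; exact: lt_trans hcb hba.

Qed.


Section Sets.
Variable A : {set T}.

Lemma covAP x y : reflect [/\ x \in A, y \in A, x < y &
    forall z, z \in A -> x < z -> z < y -> False] (covA A x y).
Proof.
apply: (iffP and4P) => [[xA yA xy /existsPn H]|[xA yA xy H]]; split=> //.
- by move=> z zA xz zy; move: (H z); rewrite zA xz zy.
- by apply/existsPn=> z; apply/negP=> /andP[zA /andP[xz zy]]; exact: H z zA xz zy.
Qed.

Lemma ex_lcov z x : z \in A -> x \in A -> z < x -> exists y, covA A y x /\ z <= y.
Proof.
move=> zA xA zx.
have [y [/andP[yA /andP[zy yx]] ymax]] :=
  @ex_max [pred w | (w \in A) && ((z <= w) && (w < x))] z
  (ltac:(by rewrite /= zA lexx zx)).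
exists y; split=> //; apply/covAP; split=> // w wA yw wx.
by move: (ymax w); rewrite /= wA wx (le_trans zy (ltW yw)) yw => /(_ isT).
Qed.

Lemma ex_ucov z x : z \in A -> x \in A -> z < x -> exists y, covA A z y /\ y <= x.
Proof.
move=> zA xA zx.
have [y [/andP[yA /andP[zy yx]] ymin]] :=
  @ex_min [pred w | (w \in A) && ((z < w) && (w <= x))] x
  (ltac:(by rewrite /= xA lexx zx)).
exists y; split=> //; apply/covAP; split=> // w wA zw wy.
by move: (ymin w); rewrite /= wA zw (le_trans (ltW wy) yx) wy => /(_ isT).
Qed.

Hypothesis jclosed : forall x y, x \in A -> y \in A -> x `|` y \in A.

Lemma join_irrP j : join_irr A j -> forall y z, y \in A -> z \in A -> j = y `|` z -> j = y \/ j = z.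
Proof.
case/and3P=> _ _ /forallP H y z yA zA e.
move: (H y); rewrite yA /= => /forallP/(_ z); rewrite zA /= e eqxx /=.
by case/orP=> /eqP ->; [left|right].
Qed.

Lemma ulc j : \bot \in A -> join_irr A j ->
  exists o, covA A o j /\ forall z, z \in A -> z < j -> z <= o.
Proof.
move=> bA jj; have /and3P[jA jb _] := jj.
have bj : \bot < j by rewrite lt_def jb le0x.
have [o [oj _]] := ex_lcov bA jA bj.
exists o; split=> // z zA zj.
have /covAP[oA _ olj ocov] := oj.
have ozA := jclosed oA zA.
have ozj : o `|` z <= j by rewrite leUx (ltW olj) (ltW zj).
case: (boolP (o `|` z == j)) => [/eqP e|ne].
- by case: (join_irrP jj oA zA (esym e)) => e'; [move: olj|move: zj]; rewrite e' ltxx.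
- have lt1 : o `|` z < j by rewrite lt_def eq_sym ne ozj.
  case: (boolP (o < o `|` z)) => [h|].
  + by case: (ocov _ ozA h lt1).
  + by rewrite lt_def leUl andbT negbK eq_sym => /eqP e; rewrite e leUr.
Qed.

Lemma kmin e o : e \in A -> ~~ (e <= o) ->
  exists k, [/\ join_irr A k, k <= e & ~~ (k <= o)].
Proof.
move=> eA eo.
have [k [/andP[kA /andP[ke ko]] kmn]] :=
  @ex_min [pred w | (w \in A) && ((w <= e) && ~~ (w <= o))] e
  (ltac:(by rewrite /= eA lexx eo)).
exists k; split=> //; apply/and3P; split=> //.
- by apply: contraNneq ko => ->; exact: le0x.
apply/forallP=> y; apply/implyP=> yA; apply/forallP=> z; apply/implyP=> zA.
apply/implyP=> /eqP kyz; apply: contraNT ko; rewrite negb_or => /andP[ky kz].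
have yk : y <= k by rewrite kyz leUl.
have zk : z <= k by rewrite kyz leUr.
have yo : y <= o.
  have ylt : y < k by rewrite lt_def ky yk.
  by apply/negPn/negP => yno; move: (kmn y); rewrite /= yA (le_trans yk ke) yno ylt => /(_ isT).
have zo : z <= o.
  have zlt : z < k by rewrite lt_def kz zk.
  by apply/negPn/negP => zno; move: (kmn z); rewrite /= zA (le_trans zk ke) zno zlt => /(_ isT).
by rewrite kyz leUx yo zo.
Qed.

End Sets.

End Gen.
Section Distr.
Variables (d : Order.disp_t) (T : finTBLatticeType d) (S : {set T}).
Hypothesis bS : \bot \in S.
Hypothesis mS : forall x y, x \in S -> y \in S -> x `&` y \in S.
Hypothesis jS : forall x y, x \in S -> y \in S -> x `|` y \in S.
Hypothesis smS : semimodular S.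
Hypothesis two : forall x a b e, covA S a x -> covA S b x -> covA S e x ->
  [|| a == b, a == e | b == e].

Lemma sm_up a b c : covA S a b -> c \in S -> a <= c -> ~~ (b <= c) -> covA S c (b `|` c).
Proof.
move=> ab cS ac bc; have /covAP[aS bS' _ _] := ab.
have := smS aS bS' cS ab; rewrite (join_r ac).
case/orP=> // /eqP e; move: bc; by rewrite e leUl.
Qed.

Lemma cov_eq a x y : covA S a x -> y \in S -> a < y -> y <= x -> y = x.
Proof.
move=> /covAP[_ _ _ H] yS ay yx; apply/eqP; rewrite eq_le yx /=.
by apply/negP => /negP nxy; apply: (H y yS ay); rewrite lt_def yx andbT; apply: contraNneq nxy => ->.
Qed.

Lemma covA_lt a x : covA S a x -> a < x.
Proof. by case/covAP. Qed.
Lemma covA_l a x : covA S a x -> a \in S.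
Proof. by case/covAP. Qed.
Lemma covA_r a x : covA S a x -> x \in S.
Proof. by case/covAP. Qed.

Lemma covA_ncmp a b x : covA S a x -> covA S b x -> a != b -> ~~ (a <= b).
Proof.
move=> ax bx ab; apply/negP=> le_ab.
have alb : a < b by rewrite lt_def eq_sym ab le_ab.
by move: (cov_eq ax (covA_l bx) alb (ltW (covA_lt bx))) (covA_lt bx) => ->; rewrite ltxx.
Qed.

Lemma lemD a b x : covA S a x -> covA S b x -> a != b -> covA S (a `&` b) a.
Proof.
move=> ax bx ab.
have aS := covA_l ax; have bS' := covA_l bx; have xS := covA_r ax.
have mS' := mS aS bS'.
have nab := covA_ncmp ax bx ab.
have ba : b != a by rewrite eq_sym.
have ma : a `&` b < a by rewrite lt_def leIl andbT; apply: contraNneq nab => ->; exact: leIr.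
apply/covAP; split=> // z zS mz za.
have [a' [a'a za']] := ex_lcov zS (covA_l ax) za.
have ma' : a `&` b < a' := lt_le_trans mz za'.
have a'S := covA_l a'a.
have na'b : ~~ (a' <= b).
  apply/negP=> h; have : a' <= a `&` b by rewrite lexI h (ltW (covA_lt a'a)).
  by move=> h2; move: (lt_le_trans ma' h2); rewrite ltxx.
have [q [/andP[qS /andP[qb qa']] qmin]] :=
  @ex_min _ _ [pred w | (w \in S) && ((w <= b) && ~~ (w <= a'))] b
  (ltac:(rewrite /= bS' lexx /=; apply: contraNN (covA_ncmp bx ax ba) => h;
          exact: le_trans h (ltW (covA_lt a'a)))).
have bq : \bot < q by rewrite lt_def le0x andbT; apply: contraNneq qa' => ->; exact: le0x.
have [q_ [q_q _]] := ex_lcov bS qS bq.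
have q_a' : q_ <= a'.
  apply/negPn/negP=> h; move: (qmin q_).
  by rewrite /= (covA_l q_q) (le_trans (ltW (covA_lt q_q)) qb) h (covA_lt q_q) => /(_ isT).
have a'e := sm_up q_q a'S q_a' qa'.
set e := q `|` a' in a'e.
have eS : e \in S by exact: covA_r a'e.
have ex : e <= x by rewrite leUx (le_trans qb (ltW (covA_lt bx))) (le_trans (ltW (covA_lt a'a)) (ltW (covA_lt ax))).
have ea : e != a.
  apply/negP=> /eqP ea; have qa : q <= a by rewrite -ea leUl.
  by move: qa'; rewrite (le_trans _ (ltW ma')) // lexI qa qb.
have nea : ~~ (e <= a).
  apply/negP=> h; have := cov_eq a'a eS (covA_lt a'e) h; exact/eqP.
have ae := sm_up a'e aS (ltW (covA_lt a'a)) nea.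
have eax : e `|` a = x.
  apply: (cov_eq ax (covA_r ae) (covA_lt ae)); by rewrite leUx ex (ltW (covA_lt ax)).
have nae : ~~ (a <= e).
  apply/negP=> h; move: ea; by rewrite (cov_eq a'e aS (covA_lt a'a) h) eqxx.
have ea2 := sm_up a'a eS (ltW (covA_lt a'e)) nae.
rewrite joinC eax in ea2.
have := two ax bx ea2; rewrite (negbTE ab) eq_sym (negbTE ea) /= => /eqP be.
have : a' <= a `&` b by rewrite lexI (ltW (covA_lt a'a)) be leUr.
by move=> h2; move: (lt_le_trans ma' h2); rewrite ltxx.
Qed.


Lemma lemE x : x \in S -> forall a y, covA S a x -> y \in S -> y <= x -> ~~ (y <= a) ->
  covA S (a `&` y) y.
Proof.
move: x; apply: lt_ind => x IH xS a y ax yS yx ya.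
case: (eqVneq y x) => [->|nyx]; first by rewrite (meet_l (ltW (covA_lt ax))).
have ylx : y < x by rewrite lt_def eq_sym nyx yx.
have [b [bx yb]] := ex_lcov yS xS ylx.
have ba : b != a by apply: contraNneq ya => <-.
have bab := lemD bx ax ba.
have yba : ~~ (y <= b `&` a) by rewrite lexI yb.
have := IH b (covA_lt bx) (covA_l bx) _ _ bab yS yb yba.
by rewrite (meetC b a) -meetA (meet_r yb).
Qed.

Lemma lemF w : w \in S -> forall j y z, j \in S -> join_irr S j -> y \in S -> z \in S ->
  y `|` z = w -> j <= w -> ~~ (j <= y) -> ~~ (j <= z) -> False.
Proof.
move: w; apply: lt_ind => w IH wS j y z jS' jj yS zS yzw jw jy jz.
have key : forall y z y', y \in S -> z \in S -> y `|` z = w -> ~~ (j <= y) -> ~~ (j <= z) ->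
    covA S y' w -> y <= y' -> j <= y' -> False.
  move=> {}y {}z y' {}yS {}zS {}yzw {}jy {}jz yw yy jy'.
  have y'S := covA_l yw.
  have zy : ~~ (z <= y').
    apply/negP=> h; have : w <= y' by rewrite -yzw leUx yy h.
    by move=> h2; move: (lt_le_trans (covA_lt yw) h2); rewrite ltxx.
  have zw : z <= w by rewrite -yzw leUr.
  have c1 := lemE wS yw zS zw zy.
  have := smS (covA_l c1) zS yS c1; rewrite (joinC z y) yzw.
  have uy : (y' `&` z) `|` y <= y' by rewrite leUx leIl yy.
  case/orP=> [/eqP e|c2].
    by move: uy; rewrite e => h; move: (lt_le_trans (covA_lt yw) h); rewrite ltxx.
  have ue : (y' `&` z) `|` y = y'.
    move: uy; rewrite le_eqVlt => /orP[/eqP //|ul].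
    by move: (cov_eq c2 y'S ul (ltW (covA_lt yw))) (covA_lt yw) => ->; rewrite ltxx.
  apply: (IH y' (covA_lt yw) y'S j y (y' `&` z)) => //.
  - exact: covA_l c1.
  - by rewrite joinC.
  - by apply: contraNN jz => h; exact: le_trans h (leIr _ _).
have yw : y <= w by rewrite -yzw leUl.
have zw : z <= w by rewrite -yzw leUr.
have ylw : y < w by rewrite lt_def yw andbT; apply: contraNneq jy => <-.
have zlw : z < w by rewrite lt_def zw andbT; apply: contraNneq jz => <-.
have jlw : j < w.
  rewrite lt_def jw andbT; apply/negP=> /eqP wj.
  case: (join_irrP jj yS zS (etrans (esym wj) (esym yzw))) => e.
    by move: jy; rewrite e lexx.
  by move: jz; rewrite e lexx.
have [v [vw jv]] := ex_lcov jS' wS jlw.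
have [y' [y'w yy']] := ex_lcov yS wS ylw.
have [z' [z'w zz']] := ex_lcov zS wS zlw.
case/or3P: (two vw y'w z'w) => /eqP e.
- by apply: (key y z y') => //; rewrite -e.
- by apply: (key z y z') => //; [rewrite joinC | rewrite -e].
- have : w <= y' by rewrite -yzw leUx yy' e zz'.
  by move=> h; move: (lt_le_trans (covA_lt y'w) h); rewrite ltxx.
Qed.

Lemma lemG v : v \in S -> forall t,
  (forall j, j \in S -> join_irr S j -> j <= v -> j <= t) -> v <= t.
Proof.
move: v; apply: lt_ind => v IH vS t H.
case: (eqVneq v \bot) => [->|vb]; first exact: le0x.
case: (boolP (join_irr S v)) => vj; first exact: H.
move: vj; rewrite /join_irr vS vb /=.
case/forallPn => y; rewrite negb_imply => /andP[yS /forallPn[z]].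
rewrite negb_imply => /andP[zS]; rewrite negb_imply => /andP[/eqP e].
rewrite negb_or => /andP[vy vz].
have yv : y <= v by rewrite e leUl.
have zv : z <= v by rewrite e leUr.
have ylv : y < v by rewrite lt_def yv andbT.
have zlv : z < v by rewrite lt_def zv andbT.
rewrite e leUx; apply/andP; split.
- apply: (IH y ylv yS t) => j jS' jj jy; apply: H => //; exact: le_trans jy yv.
- apply: (IH z zlv zS t) => j jS' jj jz; apply: H => //; exact: le_trans jz zv.
Qed.

Lemma distrS : distributive_on S.
Proof.
move=> x y z xS yS zS; apply/eqP; rewrite eq_le; apply/andP; split; last first.
  by rewrite leUx !leI2 // ?leUl ?leUr.
apply: lemG; first by apply: mS => //; exact: jS.
move=> j jS' jj; rewrite lexI => /andP[jx jyz].
case: (boolP (j <= y)) => jy.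
  by apply: le_trans (leUl _ _); rewrite lexI jx jy.
case: (boolP (j <= z)) => jz.
  by apply: le_trans (leUr _ _); rewrite lexI jx jz.
by case: (lemF (jS yS zS) jS' jj yS zS erefl jyz jy jz).
Qed.

End Distr.
Section Diag.
Variables (d : Order.disp_t) (T : finTBLatticeType d) (lam : rel T).
Hypothesis Hd : is_diagram [set: T] lam.

Lemma D1 x y : lam x y -> ~~ (x <= y) && ~~ (y <= x).
Proof. by case: Hd => H _ _ _ _; apply: H; rewrite inE. Qed.
Lemma D1l x y : lam x y -> ~~ (x <= y).
Proof. by move/D1/andP=> []. Qed.
Lemma D1r x y : lam x y -> ~~ (y <= x).
Proof. by move/D1/andP=> []. Qed.
Lemma D2 x y : ~~ (x <= y) -> ~~ (y <= x) -> lam x y || lam y x.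
Proof. by case: Hd => _ H _ _ _; apply: H; rewrite inE. Qed.
Lemma D3 x y : lam x y -> ~~ lam y x.
Proof. by case: Hd => _ _ H _ _; apply: H; rewrite inE. Qed.
Lemma lamxx x : ~~ lam x x.
Proof. by apply/negP=> /D1l; rewrite lexx. Qed.

Definition lt1 x y := (x < y) || lam x y.
Definition lt2 x y := (x < y) || lam y x.

Lemma lt1_trans : transitive lt1.
Proof. by case: Hd => _ _ _ H _ y x z; apply: H; rewrite inE. Qed.
Lemma lt2_trans : transitive lt2.
Proof. by case: Hd => _ _ _ _ H y x z; apply: H; rewrite inE. Qed.
Lemma lt1_irr : irreflexive lt1.
Proof. by move=> x; rewrite /lt1 ltxx (negbTE (lamxx x)). Qed.
Lemma lt2_irr : irreflexive lt2.
Proof. by move=> x; rewrite /lt2 ltxx (negbTE (lamxx x)). Qed.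

Lemma le_lt1 a b c : a <= b -> lt1 b c -> lt1 a c.
Proof.
rewrite le_eqVlt => /orP[/eqP -> //|ab] bc.
by apply: lt1_trans bc; rewrite /lt1 ab.
Qed.
Lemma lt1_le a b c : lt1 a b -> b <= c -> lt1 a c.
Proof.
move=> ab; rewrite le_eqVlt => /orP[/eqP <- //|bc].
by apply: lt1_trans ab _; rewrite /lt1 bc.
Qed.
Lemma le_lt2 a b c : a <= b -> lt2 b c -> lt2 a c.
Proof.
rewrite le_eqVlt => /orP[/eqP -> //|ab] bc.
by apply: lt2_trans bc; rewrite /lt2 ab.
Qed.
Lemma lt2_le a b c : lt2 a b -> b <= c -> lt2 a c.
Proof.
move=> ab; rewrite le_eqVlt => /orP[/eqP <- //|bc].
by apply: lt2_trans ab _; rewrite /lt2 bc.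
Qed.

Lemma lam_trans x y z : lam x y -> lam y z -> lam x z.
Proof.
move=> xy yz.
have h1 : lt1 x z by apply: (@lt1_trans y); rewrite /lt1 ?xy ?yz orbT.
have h2 : lt2 z x by apply: (@lt2_trans y); rewrite /lt2 ?xy ?yz orbT.
move: h1 h2; rewrite /lt1 /lt2; case/orP=> [xz|//]; case/orP=> [zx|//].
by move: (lt_trans xz zx); rewrite ltxx.
Qed.

Lemma flip_diag : is_diagram [set: T] (fun x y => lam y x).
Proof.
split=> x y.
- by move=> _ _ /D1; rewrite andbC.
- by move=> _ _ h1 h2; rewrite orbC; apply: D2.
- by move=> _ _; apply: D3.
- by move=> z _ _ _; apply: lt2_trans.
- by move=> z _ _ _; apply: lt1_trans.
Qed.

Lemma LP x y z : lam x y -> ~~ (z <= y) -> ~~ (y <= z) -> (x <= z) || (z <= x) -> lam z y.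
Proof.
move=> xy zy yz cmp; case/orP: (D2 zy yz) => // yzl; exfalso.
case/orP: cmp => h.
- have h2 : lt2 y z by apply: (@lt2_le y x z); rewrite /lt2 ?xy ?orbT.
  move: h2; rewrite /lt2 => /orP[/ltW|]; [by rewrite (negbTE yz)|].
  by move/D3; rewrite yzl.
- have h1 : lt1 y x by apply: (@lt1_le y z x); rewrite /lt1 ?yzl ?orbT.
  move: h1; rewrite /lt1 => /orP[/ltW|]; [by rewrite (negbTE (D1r xy))|].
  by move/D3; rewrite xy.
Qed.

Hypothesis smT : semimodular [set: T].

Lemma find_cover j o y : join_irr [set: T] j -> covA [set: T] o j ->
  (forall z, z < j -> z <= o) -> lam y j ->
  exists a, covA [set: T] o a /\ lam a j.
Proof.
move=> jj oj ob yj.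
have [y0 [y0j y0min]] := @ex_min _ _ [pred w | lam w j] y yj.
have y0b : \bot < y0.
  rewrite lt_def le0x andbT; apply/negP=> /eqP e.
  by move: (D1l y0j); rewrite e le0x.
have [y' [y'y0 _]] := ex_lcov (in_setT _) (in_setT _) y0b.
have y'lt := covA_lt y'y0.
have y'j : y' <= j.
  case: (boolP (y' <= j)) => // ny'j.
  case: (boolP (j <= y')) => jy'.
    by move: (D1r y0j); rewrite (le_trans jy' (ltW y'lt)).
  have := LP y0j ny'j jy' (ltac:(by rewrite (ltW y'lt) orbT)).
  by move=> h; move: (y0min y' h); rewrite y'lt.
have y'lj : y' < j.
  rewrite lt_def y'j andbT; apply/negP=> /eqP e.
  by move: (D1r y0j); rewrite e (ltW y'lt).
have y'o := ob y' y'lj.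
have oj' := covA_lt oj.
have ny0o : ~~ (y0 <= o).
  by apply/negP=> h; move: (D1l y0j); rewrite (le_trans h (ltW oj')).
have oa := sm_up smT y'y0 (in_setT _) y'o ny0o.
exists (y0 `|` o); split=> //.
have jnot : j != y0 `|` o.
  apply/negP=> /eqP e; case: (join_irrP jj (in_setT _) (in_setT _) e) => e'.
    by move: y0j; rewrite -e' /= (negbTE (lamxx j)).
  by move: oj'; rewrite e' ltxx.
apply: (LP y0j) => //; last by rewrite leUl.
- apply/negP=> h; rewrite le_eqVlt in h; case/orP: h => [/eqP e|h].
    by move: jnot; rewrite e eqxx.
  by move: (lt_le_trans (covA_lt oa) (ob _ h)); rewrite ltxx.
- apply/negP=> h; have := cov_eq oa (in_setT _) oj' h.
  by move=> e; move: jnot; rewrite e eqxx.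
Qed.

End Diag.
Section Main.
Variables (d : Order.disp_t) (T : finTBLatticeType d) (lam : rel T) (L : {set T}).
Hypothesis Hd : is_diagram [set: T] lam.
Hypothesis cpL : cp_sublattice01 L.
Hypothesis condc : forall x, [exists y, covA [set: T] y x && (y \notin L)] ->
        #|[set y | covA [set: T] y x]| <= 2.
Hypothesis smT : semimodular [set: T].

Lemma bL : \bot \in L. Proof. by have [[h1 h2 h3 h4] h5] := cpL. Qed.
Lemma tL : \top \in L. Proof. by have [[h1 h2 h3 h4] h5] := cpL. Qed.
Lemma mL x y : x \in L -> y \in L -> x `&` y \in L. Proof. have [[h1 h2 h3 h4] h5] := cpL; exact: h3. Qed.
Lemma jL x y : x \in L -> y \in L -> x `|` y \in L. Proof. have [[h1 h2 h3 h4] h5] := cpL; exact: h4. Qed.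
Lemma cpc x y : covA L x y -> covA [set: T] x y. Proof. have [[h1 h2 h3 h4] h5] := cpL; exact: h5. Qed.

Lemma card3 x a b e : covA [set: T] a x -> covA [set: T] b x -> covA [set: T] e x ->
  a != b -> a != e -> b != e -> [|| a \notin L, b \notin L | e \notin L] -> False.
Proof.
move=> ax bx ex ab ae be hL.
have : #|[set y | covA [set: T] y x]| <= 2.
  apply: condc; apply/existsP.
  move: hL => /orP[h|/orP[h|h]]; [exists a|exists b|exists e]; by rewrite h andbT.
have sub : (a |: (b |: [set e])) \subset [set y | covA [set: T] y x].
  by apply/subsetP=> y; rewrite !inE => /orP[/eqP->|/orP[/eqP->|/eqP->]].
have c3 : #|(a |: (b |: [set e]))| = 3.
  rewrite !cardsU1 cards1 !inE negb_or ab ae be.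
  done.
by move/(leq_trans (subset_leq_card sub)); rewrite c3.
Qed.


Let C := Cl L lam.
Let S := lside lam C.

Lemma C_L x : x \in C -> x \in L.
Proof. by rewrite inE => /andP[]. Qed.
Lemma C_nl x y : x \in C -> y \in L -> ~~ lam y x.
Proof.
rewrite inE => /andP[_ /existsPn H] yL; move: (H y); by rewrite yL.
Qed.
Lemma C_chain x y : x \in C -> y \in C -> (x <= y) || (y <= x).
Proof.
move=> xC yC; case: (boolP (x <= y)) => //= xy; apply/negPn/negP=> yx.
case/orP: (D2 Hd xy yx) => h.
- by move: (C_nl yC (C_L xC)); rewrite h.
- by move: (C_nl xC (C_L yC)); rewrite h.
Qed.
Lemma botC : \bot \in C.
Proof.
rewrite inE bL /=; apply/existsPn=> y; apply/negP=> /andP[_ h].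
by move: (D1r Hd h); rewrite le0x.
Qed.
Lemma topC : \top \in C.
Proof.
rewrite inE tL /=; apply/existsPn=> y; apply/negP=> /andP[_ h].
by move: (D1l Hd h); rewrite lex1.
Qed.

Lemma C_succ c : c \in C -> c != \top -> exists u, u \in C /\ covA [set: T] c u.
Proof.
move=> cC ct.
have cL := C_L cC.
have ctop : c < \top by rewrite lt_def eq_sym ct lex1.
have [u0 [cu0 _]] := ex_ucov cL tL ctop.
have [u [cu umin]] := @ex_minr _ _ (lt1 lam) [pred w | covA L c w] u0
   (lt1_trans Hd) (lt1_irr Hd) cu0.
have uL := covA_r cu.
have clu := covA_lt cu.
exists u; split; last exact: cpc.
rewrite inE uL /=; apply/existsPn=> y; apply/negP=> /andP[yL yu].
have ncy := C_nl cC yL.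
case: (boolP (y <= c)) => yc.
  by move: (D1l Hd yu); rewrite (le_trans yc (ltW clu)).
case: (boolP (c <= y)) => cy.
  have cly : c < y by rewrite lt_def cy andbT; apply: contraNneq yc => ->.
  have [v [cv vy]] := ex_ucov cL yL cly.
  have : lt1 lam v u by apply: (le_lt1 Hd vy); rewrite /lt1 yu orbT.
  by move=> h; move: (umin v cv); rewrite h.
case/orP: (D2 Hd yc cy) => h; first by move: ncy; rewrite h.
have h1 : lt2 lam c y.
  apply: (@lt2_trans _ _ lam Hd u); first by rewrite /lt2 clu.
  by rewrite /lt2 yu orbT.
by move: h1; rewrite /lt2 (negbTE ncy) orbF => /ltW; rewrite (negbTE cy).
Qed.

Lemma C_max x : (forall c, c \in C -> (x <= c) || (c <= x)) -> x \in C.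
Proof.
move=> H.
have [c1 [/andP[c1C c1x] c1max]] := @ex_max _ _ [pred c | (c \in C) && (c <= x)] \bot
   (ltac:(by rewrite /= botC le0x)).
case: (eqVneq c1 x) => [<- //|nc1x].
have c1lx : c1 < x by rewrite lt_def eq_sym nc1x c1x.
have c1t : c1 != \top.
  by apply/negP=> /eqP e; move: (lt_le_trans c1lx (lex1 x)); rewrite e ltxx.
have [u [uC cu]] := C_succ c1C c1t.
case/orP: (H u uC) => h.
- case: (eqVneq x u) => [-> //|nxu].
  have xlu : x < u by rewrite lt_def eq_sym nxu h.
  by case/covAP: cu => _ _ _ /(_ x (in_setT x) c1lx xlu).
- by move: (c1max u); rewrite /= uC h (covA_lt cu) => /(_ isT).
Qed.

Lemma inS x : x \in S = [forall c in C, ~~ lam c x].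
Proof.
apply/idP/idP.
- rewrite /S /lside in_set => /orP[xC|/existsP[c0 /andP[c0C xc0]]]; apply/forallP=> c; apply/implyP=> cC.
  + exact: C_nl xC (C_L cC).
  + apply/negP=> cx.
    case/orP: (C_chain cC c0C); rewrite le_eqVlt => /orP[/eqP e|h].
    * by move: (D3 Hd xc0); rewrite -e cx.
    * have : lt2 lam x x.
        apply: (@lt2_trans _ _ lam Hd c); first by rewrite /lt2 cx orbT.
        by apply: (le_lt2 Hd (ltW h)); rewrite /lt2 xc0 orbT.
      by rewrite (lt2_irr Hd).
    * by move: (D3 Hd xc0); rewrite e cx.
    * have : lt1 lam x x.
        apply: (@lt1_trans _ _ lam Hd c); last by rewrite /lt1 cx orbT.
        by apply: (lt1_le Hd _ (ltW h)); rewrite /lt1 xc0 orbT.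
      by rewrite (lt1_irr Hd).
- move=> /forallP H; rewrite /S /lside in_set.
  case: (boolP [exists c in C, lam x c]) => [h|/existsPn H2]; first by apply/orP; right.
  apply/orP; left; apply: C_max => c cC.
  case: (boolP (x <= c)) => //= xc; apply/negPn/negP=> cx.
  case/orP: (D2 Hd xc cx) => h.
  + by move: (H2 c); rewrite cC h.
  + by move: (H c); rewrite cC h.
Qed.

Lemma C_S x : x \in C -> x \in S.
Proof. by move=> xC; rewrite /S /lside in_set xC. Qed.

Lemma S_nl x c : x \in S -> c \in C -> ~~ lam c x.
Proof. by rewrite inS => /forallP /(_ c) /implyP. Qed.

Lemma S_meet x y : x \in S -> y \in S -> x `&` y \in S.
Proof.
move=> xS yS; rewrite inS; apply/forallP=> c; apply/implyP=> cC; apply/negP=> h.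
have h1 : lt1 lam c x by apply: (lt1_le Hd _ (leIl x y)); rewrite /lt1 h orbT.
have h2 : lt1 lam c y by apply: (lt1_le Hd _ (leIr y x)); rewrite /lt1 h orbT.
move: h1 h2; rewrite /lt1 (negbTE (S_nl xS cC)) (negbTE (S_nl yS cC)) !orbF => cx cy.
by move: (D1l Hd h); rewrite lexI (ltW cx) (ltW cy).
Qed.

Lemma S_join x y : x \in S -> y \in S -> x `|` y \in S.
Proof.
move=> xS yS; rewrite inS; apply/forallP=> c; apply/implyP=> cC; apply/negP=> h.
have h1 : lt2 lam x c by apply: (le_lt2 Hd (leUl x y)); rewrite /lt2 h orbT.
have h2 : lt2 lam y c by apply: (le_lt2 Hd (leUr y x)); rewrite /lt2 h orbT.
move: h1 h2; rewrite /lt2 (negbTE (S_nl xS cC)) (negbTE (S_nl yS cC)) !orbF => xc yc.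
by move: (D1r Hd h); rewrite leUx (ltW xc) (ltW yc).
Qed.

Lemma S_cov x y : covA S x y -> covA [set: T] x y.
Proof.
case/covAP=> xS yS xy H; apply/covAP; split; rewrite ?inE // => z _ xz zy.
case: (boolP (z \in S)) => zS; first exact: H z zS xz zy.
move: zS; rewrite inS => /forallPn[c]; rewrite negb_imply negbK => /andP[cC cz].
have h1 : lt2 lam x c by apply: (le_lt2 Hd (ltW xz)); rewrite /lt2 cz orbT.
have h2 : lt1 lam c y by apply: (lt1_le Hd _ (ltW zy)); rewrite /lt1 cz orbT.
move: h1 h2; rewrite /lt2 /lt1 (negbTE (S_nl xS cC)) (negbTE (S_nl yS cC)) !orbF => xc cy.
exact: H c (C_S cC) xc cy.
Qed.

Lemma covT_S x y : x \in S -> y \in S -> covA [set: T] x y -> covA S x y.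
Proof.
move=> xS yS /covAP[_ _ xy H]; apply/covAP; split=> // z _; exact: H z (in_setT z).
Qed.

Lemma SL x : x \in S -> x \in L -> x \in C.
Proof.
rewrite /S /lside in_set => /orP[//|/existsP[c /andP[cC xc]]] xL.
by move: (C_nl cC xL); rewrite xc.
Qed.

Lemma S_sm : semimodular S.
Proof.
move=> a b c aS bS cS ab.
have := smT (in_setT a) (in_setT b) (in_setT c) (S_cov ab).
case/orP=> [->//|h]; apply/orP; right.
by apply: covT_S => //; [apply: S_join|apply: S_join].
Qed.

Lemma S_two x a b e : covA S a x -> covA S b x -> covA S e x -> [|| a == b, a == e | b == e].
Proof.
move=> ax bx ex.
case: (eqVneq a b) => //= ab; case: (eqVneq a e) => //= ae; case: (eqVneq b e) => //= be.
exfalso; apply: (card3 (S_cov ax) (S_cov bx) (S_cov ex) ab ae be).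
case: (boolP (a \in L)) => aL //=; case: (boolP (b \in L)) => bL' //=.
have aC := SL (covA_l ax) aL; have bC := SL (covA_l bx) bL'.
case/orP: (C_chain aC bC) => h.
- by move: (covA_ncmp ax bx ab); rewrite h.
- by move: (covA_ncmp bx ax (ltac:(by rewrite eq_sym))); rewrite h.
Qed.

Lemma partI : cp_sublattice01 S /\ distributive_on S.
Proof.
have bS : \bot \in S := C_S botC.
have tS : \top \in S := C_S topC.
split; first by split; [split=> //; [exact: S_meet|exact: S_join]|exact: S_cov].
exact: (distrS bS S_meet S_join S_sm S_two).
Qed.


Definition inc (x y : T) := ~~ (x <= y) && ~~ (y <= x).
Definition J3 (A : {set T}) := exists p q r,
  [/\ p \in Jset A, q \in Jset A, r \in Jset A & [&& inc p q, inc p r & inc q r]].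

Lemma chainP (K : {set T}) x y : is_chain K -> x \in K -> y \in K -> (x <= y) || (y <= x).
Proof.
move=> /forallP /(_ x) /implyP H xK yK.
by move: (H xK) => /forallP /(_ y) /implyP; apply.
Qed.

Lemma inc_sym x y : inc x y = inc y x.
Proof. by rewrite /inc andbC. Qed.

Lemma slim_J3 A : slim A -> ~ J3 A.
Proof.
case=> [K1 [K2 [c1 c2 e]]] [p [q [r [pJ qJ rJ /and3P[pq pr qr]]]]].
have mem x : x \in Jset A -> (x \in K1) || (x \in K2) by rewrite e inE.
have bad x y : inc x y -> x \in K1 -> y \in K1 -> False.
  by move=> /andP[h1 h2] xK yK; move: (chainP c1 xK yK); rewrite (negbTE h1) (negbTE h2).
have bad2 x y : inc x y -> x \in K2 -> y \in K2 -> False.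
  by move=> /andP[h1 h2] xK yK; move: (chainP c2 xK yK); rewrite (negbTE h1) (negbTE h2).
case/orP: (mem p pJ) => hp; case/orP: (mem q qJ) => hq; case/orP: (mem r rJ) => hr;
 solve [ exact: bad pq hp hq | exact: bad pr hp hr | exact: bad qr hq hr
       | exact: bad2 pq hp hq | exact: bad2 pr hp hr | exact: bad2 qr hq hr ].
Qed.

Lemma lam_inc x y : lam x y -> inc x y.
Proof. by move=> h; rewrite /inc; exact: (D1 Hd h). Qed.

Lemma J3_of A x y z : x \in Jset A -> y \in Jset A -> z \in Jset A ->
  lam x y -> lam z x -> J3 A.
Proof.
move=> xJ yJ zJ xy zx.
have zy := lam_trans Hd zx xy.
exists z, x, y; split=> //; by rewrite !lam_inc.
Qed.

Lemma J3_slim A : ~ J3 A -> slim A.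
Proof.
move=> nJ.
exists [set x in Jset A | ~~ [exists y in Jset A, lam y x]],
       [set x in Jset A | [exists y in Jset A, lam y x]]; split.
- apply/forallP=> x; apply/implyP; rewrite inE => /andP[xJ /existsPn hx].
  apply/forallP=> y; apply/implyP; rewrite inE => /andP[yJ /existsPn hy].
  case: (boolP (x <= y)) => //= xy; apply/negPn/negP=> yx.
  case/orP: (D2 Hd xy yx) => h.
  + by move: (hy x); rewrite xJ h.
  + by move: (hx y); rewrite yJ h.
- apply/forallP=> x; apply/implyP; rewrite inE => /andP[xJ /existsP[x' /andP[x'J x'x]]].
  apply/forallP=> y; apply/implyP; rewrite inE => /andP[yJ /existsP[y' /andP[y'J y'y]]].
  case: (boolP (x <= y)) => //= xy; apply/negPn/negP=> yx; apply: nJ.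
  case/orP: (D2 Hd xy yx) => h.
  + exact: J3_of xJ yJ x'J h x'x.
  + exact: J3_of yJ xJ y'J h y'y.
- apply/setP=> x; rewrite !inE -andb_orr orNb andbT //.
Qed.

Lemma liftJ p : p \in Jset L -> exists k,
  [/\ k \in Jset [set: T], k <= p & forall z, z \in L -> z < p -> ~~ (k <= z)].
Proof.
rewrite inE => pj.
have [o [op ob]] := ulc jL bL pj.
have npo : ~~ (p <= o) by apply/negP=> h; move: (lt_le_trans (covA_lt op) h); rewrite ltxx.
have [k [kj kp ko]] := @kmin _ _ [set: T] p o (in_setT p) npo.
exists k; split=> //; first by rewrite inE.
move=> z zL zp; apply: contraNN ko => kz; exact: le_trans kz (ob z zL zp).
Qed.

Lemma J3LT : J3 L -> J3 [set: T].
Proof.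
case=> p [q [r [pJ qJ rJ /and3P[pq pr qr]]]].
have [kp [kpJ kpp kpz]] := liftJ pJ.
have [kq [kqJ kqq kqz]] := liftJ qJ.
have [kr [krJ krr krz]] := liftJ rJ.
have pL : p \in L by move: pJ; rewrite inE => /and3P[].
have qL : q \in L by move: qJ; rewrite inE => /and3P[].
have rL : r \in L by move: rJ; rewrite inE => /and3P[].
have key u v ku kv : u \in L -> v \in L -> inc u v -> ku <= u -> kv <= v ->
    (forall z, z \in L -> z < u -> ~~ (ku <= z)) -> ~~ (ku <= kv).
  move=> uL vL /andP[uv _] kuu kvv kuz; apply/negP=> h.
  have : ku <= u `&` v by rewrite lexI kuu (le_trans h kvv).
  apply/negP; apply: kuz; first exact: mL.
  rewrite lt_def leIl andbT; apply: contraNneq uv => ->; exact: leIr.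
exists kp, kq, kr; split=> //; apply/and3P; split; apply/andP; split.
- exact: key pq kpp kqq kpz.
- by apply: key qL pL _ kqq kpp kqz; rewrite inc_sym.
- exact: key pr kpp krr kpz.
- by apply: key rL pL _ krr kpp krz; rewrite inc_sym.
- exact: key qr kqq krr kqz.
- by apply: key rL qL _ krr kqq krz; rewrite inc_sym.
Qed.


Lemma middle p q r : inc p q -> inc p r -> inc q r ->
  exists j y z, [/\ (j == p) || (j == q) || (j == r), lam y j & lam j z].
Proof.
move=> /andP[a1 a2] /andP[b1 b2] /andP[c1 c2].
case/orP: (D2 Hd a1 a2) => h1; case/orP: (D2 Hd b1 b2) => h2; case/orP: (D2 Hd c1 c2) => h3.
all: first [ by exists p, q, r; split; rewrite ?eqxx ?orbT
           | by exists p, r, q; split; rewrite ?eqxx ?orbT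
           | by exists q, p, r; split; rewrite ?eqxx ?orbT
           | by exists q, r, p; split; rewrite ?eqxx ?orbT
           | by exists r, p, q; split; rewrite ?eqxx ?orbT
           | by exists r, q, p; split; rewrite ?eqxx ?orbT ].
Qed.

Lemma meet_o o u v : covA [set: T] o u -> covA [set: T] o v -> inc u v -> u `&` v = o.
Proof.
move=> ou ov /andP[uv _].
have ouv : o <= u `&` v by rewrite lexI (ltW (covA_lt ou)) (ltW (covA_lt ov)).
have uvu : u `&` v < u by rewrite lt_def leIl andbT; apply: contraNneq uv => ->; exact: leIr.
move: ouv; rewrite le_eqVlt => /orP[/eqP -> //|h].
by case/covAP: ou => _ _ _ /(_ _ (in_setT _) h uvu).
Qed.

Lemma J3TL : J3 [set: T] -> J3 L.
Proof.
case=> p [q [r [pJ qJ rJ /and3P[pq pr qr]]]].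
have [j [y [z [jin yj jz]]]] := middle pq pr qr.
have jJ : j \in Jset [set: T].
  by case/orP: jin => [/orP[]|] /eqP ->.
have jj : join_irr [set: T] j by move: jJ; rewrite inE.
have [o [oj ob]] := @ulc _ _ [set: T] (fun _ _ _ _ => in_setT _) j (in_setT _) jj.
have ob' : forall w, w < j -> w <= o by move=> w; exact: ob w (in_setT w).
have [a [oa aj]] := find_cover Hd smT jj oj ob' yj.
have [c [oc jc]] := find_cover (flip_diag Hd) smT jj oj ob' jz.
have jc' : lam j c by [].
have ac := lam_trans Hd aj jc'.
have /andP[naj nja] := lam_inc aj.
have /andP[njc ncj] := lam_inc jc'.
have /andP[nac nca] := lam_inc ac.
have jac : j <= a `|` c.
  case: (boolP (j <= a `|` c)) => // h; exfalso.
  have h2 : ~~ (a `|` c <= j) by apply: contraNN naj => h2; exact: le_trans (leUl a c) h2.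
  case/orP: (D2 Hd h h2) => h3.
  - have : lt2 lam a j by apply: (le_lt2 Hd (leUl a c)); rewrite /lt2 h3 orbT.
    rewrite /lt2 => /orP[/ltW|]; first by rewrite (negbTE naj).
    by move/(D3 Hd); rewrite aj.
  - have : lt1 lam c j by apply: (le_lt1 Hd (leUr c a)); rewrite /lt1 h3 orbT.
    rewrite /lt1 => /orP[/ltW|]; first by rewrite (negbTE ncj).
    by move/(D3 Hd); rewrite jc'.
have oa' := ltW (covA_lt oa); have oc' := ltW (covA_lt oc); have oj' := ltW (covA_lt oj).
have ha := sm_up smT oc (in_setT a) oa' nca.
have hja := sm_up smT oj (in_setT a) oa' nja.
have e1 : j `|` a = c `|` a.
  apply: (cov_eq ha (in_setT _) (covA_lt hja)).
  by rewrite leUx leUr (joinC c a) jac.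
have hj := sm_up smT oa (in_setT j) oj' naj.
have hc := sm_up smT oa (in_setT c) oc' nac.
rewrite joinC in ha; rewrite (joinC a j) e1 (joinC c a) in hj.
have aneq : a != j by apply: contraNneq naj => ->.
have aneq2 : a != c by apply: contraNneq nac => ->.
have jneq : j != c by apply: contraNneq njc => ->.
have allL : [&& a \in L, j \in L & c \in L].
  apply/negPn/negP=> h; apply: (card3 ha hj hc aneq aneq2 jneq).
  by move: h; rewrite !negb_and.
case/and3P: allL => aL jL' cL.
have ajo := meet_o oa oj (lam_inc aj).
have aco := meet_o oa oc (lam_inc ac).
have jco := meet_o oj oc (lam_inc jc').
have oL : o \in L by rewrite -ajo; exact: mL.
have nao : ~~ (a <= o) by apply/negP=> h; move: (lt_le_trans (covA_lt oa) h); rewrite ltxx.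
have njo : ~~ (j <= o) by apply/negP=> h; move: (lt_le_trans (covA_lt oj) h); rewrite ltxx.
have nco : ~~ (c <= o) by apply/negP=> h; move: (lt_le_trans (covA_lt oc) h); rewrite ltxx.
have [ka [kaJ kaa kao]] := @kmin _ _ L a o aL nao.
have [kj [kjJ kjj kjo]] := @kmin _ _ L j o jL' njo.
have [kc [kcJ kcc kco]] := @kmin _ _ L c o cL nco.
have key u v ku kv : u `&` v = o -> ku <= u -> kv <= v -> ~~ (ku <= o) -> ~~ (ku <= kv).
  move=> uvo kuu kvv kuo; apply: contraNN kuo => h.
  by rewrite -uvo lexI kuu (le_trans h kvv).
exists ka, kj, kc; split; rewrite ?inE //; apply/and3P; split; apply/andP; split.
- exact: key ajo kaa kjj kao.
- by apply: key _ kjj kaa kjo; rewrite meetC.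
- exact: key aco kaa kcc kao.
- by apply: key _ kcc kaa kco; rewrite meetC.
- exact: key jco kjj kcc kjo.
- by apply: key _ kcc kjj kco; rewrite meetC.
Qed.

Lemma partII : slim [set: T] <-> slim L.
Proof.
split=> h.
- apply: J3_slim => h3; exact: (slim_J3 h (J3LT h3)).
- apply: J3_slim => h3; exact: (slim_J3 h (J3TL h3)).
Qed.

End Main.

Unset Implicit Arguments.

Theorem mainTheorem4 (d : Order.disp_t) (T : finTBLatticeType d)
    (L : {set T}) (lam : rel T) :
  planar L -> semimodular L -> length_ge2 L ->
  rect_extension L ->
  is_diagram [set: T] lam ->
  let S := lside lam (Cl L lam) in
  (cp_sublattice01 S /\ distributive_on S) /\ (slim [set: T] <-> slim L).
Proof.
move=> _ _ _ [rect cpL condc] Hd S.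
case: rect => _ smT _.
split; [exact: (partI Hd cpL condc smT) | exact: (partII Hd cpL condc smT)].
Qed.
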